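(* Let $\mathcal{E}^\ell$ be a left (resp. right) simple infinitesimal earthquake along a geodesic $\ell$ of $\mathbb{H}^2$, and let $S_1,S_2$ be two strata of the lamination $\{\ell\}$. Let $Y=\mathrm{Comp}(S_1,S_2)=K_{S_2}-K_{S_1}=\Lambda(\sigma)$ be the comparison Killing field, and let $\phi_Y(\eta)=\langle(1,\eta),\sigma\rangle$ for $\eta\in\overline{\mathbb{D}^2}$ (on $\mathbb{S}^1$ this is the support function of $Y$). Then $\phi_Y(x)\ge0$ (resp. $\phi_Y(x)\le0$) for every $x$ in the closure $\overline{S_2}\subset\overline{\mathbb{D}^2}$, and $\phi_Y(x)\le0$ (resp. $\phi_Y(x)\ge0$) for every $x\in\overline{S_1}$.
   Context: $\mathbb{R}^{1,2}$ is $\mathbb{R}^3$ with $\langle x,y\rangle=-x_0y_0+x_1y_1+x_2y_2$; $\mathbb{H}^2$ is identified with the Klein disk $\mathbb{D}^2$ (boundary $\mathbb{S}^1$) via $\Pi(x_0,x_1,x_2)=(x_1/x_0,x_2/x_0)$. Killing fields: $\Lambda(\sigma):\eta\mapsto\mathrm{d}_{(1,\eta)}\Pi((1,\eta)\boxtimes\sigma)$ with $\langle x\boxtimes y,v\rangle=\det(x,y,v)$; hyperbolic if $\langle\sigma,\sigma\rangle>0$, axis $\Pi(\mathbb{H}^2\cap\sigma^\perp)$. The support function of a vector field $Y$ on $\mathbb{S}^1$ is $\phi_Y$ with $Y(z)=iz\phi_Y(z)$; for $Y=\Lambda(\sigma)$ it equals $z\mapsto\langle(1,z),\sigma\rangle$.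 A simple infinitesimal earthquake along $\ell$ is an infinitesimal earthquake along the lamination $\{\ell\}$, whose strata are $\ell$ and the two components of $\mathbb{D}^2\setminus\ell$. A left (resp. right) infinitesimal earthquake along a lamination: a vector field on $\mathbb{H}^2$ equal on each stratum $S$ to a Killing field $K_S$, such that for strata $S,S'$, $\mathfrak{a}=K_{S'}-K_S$ vanishes only if one of $S,S'$ is in the closure of the other, and otherwise is hyperbolic with axis $\ell'$ weakly separating $S,S'$ and translating to the left (resp. right) seen from $S$ to $S'$ (for an arc $c$ from $S$ to $S'$ crossing $\ell'$ once at $x_0=c(t_0)$ and $w$ tangent to $\ell'$ at $x_0$ pointing towards $\exp(t\mathfrak{a})x_0$, $t>0$, $(c'(t_0),w)$ is positively, resp. negatively, oriented). *)

(* Defs.v *)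
From HB Require Import structures.
From mathcomp Require Import all_boot all_order all_algebra.
From mathcomp Require Import all_classical all_reals all_analysis.
Set Implicit Arguments. Unset Strict Implicit. Unset Printing Implicit Defensive.
Import Order.TTheory GRing.Theory Num.Theory.
Import numFieldNormedType.Exports.
Local Open Scope classical_set_scope.
Local Open Scope ring_scope.

(* R^{1,2}: row vectors of length 3; the plane R^2 (containing the Klein disk). *)
Notation vec3 R := ('rV[R]_3) (only parsing).
Notation vec2 R := ('rV[R]_2) (only parsing).

Section Hyp.
Variable R : realType.
Local Notation vec3 := ('rV[R]_3) (only parsing).
Local Notation vec2 := ('rV[R]_2) (only parsing).

Definition mdot (x y : vec3) : R :=
  - (x 0 0 * y 0 0) + x 0 1 * y 0 1 + x 0 2 * y 0 2.

(* the 3x3 matrix with rows x, y, v  (det of rows = det of columns) *)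
Definition mat3 (x y v : vec3) : 'M[R]_3 :=
  \matrix_(i < 3, j < 3)
    (if (i : nat) == 0%N then x 0 j else if (i : nat) == 1%N then y 0 j else v 0 j).

Definition evec (j : 'I_3) : vec3 := \row_(k < 3) ((k == j)%:R).

(* x ⊠ y : the unique vector with <x ⊠ y, v> = det(x,y,v) for all v;
   its j-th coordinate is eps_j det(x,y,e_j) with eps = (-1,1,1). *)
Definition mcross (x y : vec3) : vec3 :=
  \row_(j < 3) ((if (j : nat) == 0%N then -1 else 1) * \det (mat3 x y (evec j))).

Definition lift1 (eta : vec2) : vec3 :=
  \row_(j < 3) (if (j : nat) == 0%N then 1 else eta 0 (inord j.-1)).

Definition Pi (x : vec3) : vec2 := \row_(j < 2) (x 0 (inord j.+1) / x 0 0).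

Definition dPi (p v : vec3) : vec2 :=
  \row_(j < 2) ((v 0 (inord j.+1) * p 0 0 - p 0 (inord j.+1) * v 0 0) / (p 0 0 ^+ 2)).

Definition Lambda (sigma : vec3) (eta : vec2) : vec2 :=
  dPi (lift1 eta) (mcross (lift1 eta) sigma).

(* hyperboloid model H^2 (upper sheet) and Klein disk D^2 *)
Definition H2 : set vec3 := [set x | mdot x x = -1 /\ 0 < x 0 0].
Definition D2 : set vec2 := [set eta | eta 0 0 ^+ 2 + eta 0 1 ^+ 2 < 1].

Definition hyperbolic (sigma : vec3) : Prop := 0 < mdot sigma sigma.

Definition axis (sigma : vec3) : set vec2 :=
  Pi @` [set x | H2 x /\ mdot x sigma = 0].

Definition geodesic (l : set vec2) : Prop :=
  exists tau : vec3, hyperbolic tau /\ l = axis tau.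

Definition component (A : set vec2) (C : set vec2) : Prop :=
  exists x, A x /\ C = connected_component A x.

Definition strata (l : set vec2) : set (set vec2) :=
  [set S | S = l \/ component (D2 `\` l) S].

Definition weakly_separates (l' S S' : set vec2) : Prop :=
  exists C C', [/\ component (D2 `\` l') C, component (D2 `\` l') C', C <> C',
                   S `<=` closure C & S' `<=` closure C'].

Definition det2 (u w : vec2) : R := u 0 0 * w 0 1 - u 0 1 * w 0 0.

Definition sgnb (b : bool) : R := if b then 1 else -1.

(* Translation of the hyperbolic field a (axis l') to the left (b = true),
   resp. right (b = false), seen from S to S': for every geodesic arc
   c(t) = (1-t) p + t q (t in [0,1]) from p in S to q in S' meeting l' exactly
   once, at x0 = c(t0), the pair (c'(t0), w) is positively (resp. negatively)
   oriented, where w is tangent to l' at x0 pointing towards exp(t a) x0, t > 0,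
   i.e. w is the velocity Lambda(a)(x0) of the flow. *)
Definition seg (p q : vec2) (t : R) : vec2 := (1 - t) *: p + t *: q.

Definition translates (b : bool) (a : vec3) (S S' : set vec2) : Prop :=
  forall p q t0, S p -> S' q -> 0 <= t0 <= 1 ->
    (forall t, 0 <= t <= 1 -> axis a (seg p q t) -> t = t0) ->
    axis a (seg p q t0) ->
    0 < sgnb b * det2 (q - p) (Lambda a (seg p q t0)).

(* A left (b = true) / right (b = false) simple infinitesimal earthquake along l:
   a vector field E on D^2 together with the Killing fields K S = Lambda (sig S)
   of the strata. *)
Definition simple_inf_earthquake (b : bool) (l : set vec2) (E : vec2 -> vec2)
    (sig : set vec2 -> vec3) : Prop :=
  [/\ geodesic l,
      (forall S, strata l S -> forall eta, S eta -> E eta = Lambda (sig S) eta) &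
      (forall S S', strata l S -> strata l S' ->
         let a := sig S' - sig S in
         (a = 0 -> S `<=` closure S' \/ S' `<=` closure S) /\
         (a <> 0 -> [/\ hyperbolic a, weakly_separates (axis a) S S'
                        & translates b a S S']))].

End Hyp.

(* Main.v *)
Require Import Defs.
From HB Require Import structures.
From mathcomp Require Import all_boot all_order all_algebra.
From mathcomp Require Import all_classical all_reals all_analysis.
From mathcomp Require Import ring lra.
Import Order.TTheory GRing.Theory Num.Theory.
Import numFieldNormedType.Exports.
Local Open Scope classical_set_scope.
Local Open Scope ring_scope.
Set Implicit Arguments. Unset Strict Implicit.

Section S.
Variable R : realType.

Definition fa (a : 'rV[R]_3) (z : 'rV[R]_2) := mdot (lift1 z) a.

Lemma i20 : (inord 0 : 'I_2) = 0. Proof. by apply/val_inj; rewrite /= inordK. Qed.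
Lemma i21 : (inord 1 : 'I_2) = 1. Proof. by apply/val_inj; rewrite /= inordK. Qed.
Lemma i31 : (inord 1 : 'I_3) = 1. Proof. by apply/val_inj; rewrite /= inordK. Qed.
Lemma i32 : (inord 2 : 'I_3) = 2. Proof. by apply/val_inj; rewrite /= inordK. Qed.

Lemma faE a z : fa a z = - a 0 0 + z 0 0 * a 0 1 + z 0 1 * a 0 2.
Proof. by rewrite /fa /mdot /lift1 !mxE /= i20 i21 mul1r. Qed.

Lemma liftE n (i : 'I_n.+1) (j : 'I_n) : lift i j = inord (bump i j).
Proof. by apply/val_inj; rewrite /= inordK //; exact: (ltn_ord (lift i j)). Qed.

Lemma det3 (A : 'M[R]_3) : \det A =
  A 0 0 * (A 1 1 * A 2 2 - A 1 2 * A 2 1) - A 0 1 * (A 1 0 * A 2 2 - A 1 2 * A 2 0)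
  + A 0 2 * (A 1 0 * A 2 1 - A 1 1 * A 2 0).
Proof.
rewrite (expand_det_row _ 0) !big_ord_recl big_ord0 /cofactor.
rewrite !(expand_det_row _ 0) !big_ord_recl !big_ord0 /cofactor !det_mx11 !mxE /=.
rewrite !liftE /bump /=.
rewrite !inordK //= .
have i30 : (inord 0 : 'I_3) = 0 by apply/val_inj; rewrite /= inordK.
rewrite i30 i31 i32 !expr0 !expr1; ring.
Qed.

Lemma i30 : (inord 0 : 'I_3) = 0. Proof. by apply/val_inj; rewrite /= inordK. Qed.

Lemma det2_Lambda a x u : det2 u (Lambda a x) =
  (1 - x 0 0 ^+ 2 - x 0 1 ^+ 2) * (u 0 0 * a 0 1 + u 0 1 * a 0 2)
  + fa a x * (x 0 0 * u 0 0 + x 0 1 * u 0 1).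
Proof.
rewrite faE /det2 /Lambda /dPi /mcross /lift1 !mxE /= !det3 /mat3 /evec !mxE /=.
rewrite ?i20 ?i21 ?i30 ?i31 ?i32 /=.
rewrite (_ : (0 + 1 %% 3)%N = 1)// i21 i20 expr1n !divr1; ring.
Qed.

Lemma fa_cont a : continuous (fa a).
Proof.
move=> z.
have -> : fa a = (fun=> - a 0 0) + ((fun w : 'rV[R]_2 => w 0 0) \* (fun=> a 0 1))
   + ((fun w : 'rV[R]_2 => w 0 1) \* (fun=> a 0 2)).
  by apply/funext => w; rewrite faE.
apply: continuousD; first apply: continuousD.
- exact: cst_continuous.
- by apply: continuousM; [exact: coord_continuous| exact: cst_continuous].
- by apply: continuousM; [exact: coord_continuous| exact: cst_continuous].
Qed.

Lemma seg_cont (p q : 'rV[R]_2) : continuous (seg p q).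
Proof.
move=> t.
have -> : seg p q = (fun s => (1 - s) *: p) + (fun s => s *: q) by apply/funext.
apply: continuousD; apply: continuousZr_tmp; last exact: cvg_id.
have := (@continuousB _ R^o _ (fun=> 1) id t (@cst_continuous _ _ _ t) cvg_id).
by [].
Qed.

Lemma seg_fa a p q t : fa a (seg p q t) = (1 - t) * fa a p + t * fa a q.
Proof. rewrite !faE /seg !mxE; ring. Qed.

Lemma seg_D2 p q t : @D2 R p -> @D2 R q -> 0 <= t <= 1 -> @D2 R (seg p q t).
Proof.
rewrite /D2 /seg /= !mxE => hp hq /andP[t0 t1].
have key : (1 - t) * (p 0 0 ^+ 2 + p 0 1 ^+ 2) + t * (q 0 0 ^+ 2 + q 0 1 ^+ 2)
  - (((1 - t) * p 0 0 + t * q 0 0) ^+ 2 + ((1 - t) * p 0 1 + t * q 0 1) ^+ 2)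
  = t * (1 - t) * ((p 0 0 - q 0 0) ^+ 2 + (p 0 1 - q 0 1) ^+ 2) by ring.
have h1 : 0 <= t * (1 - t) * ((p 0 0 - q 0 0) ^+ 2 + (p 0 1 - q 0 1) ^+ 2).
  by apply: mulr_ge0; [apply: mulr_ge0; lra| apply: addr_ge0; apply: sqr_ge0].
have h2 : (1 - t) * (p 0 0 ^+ 2 + p 0 1 ^+ 2) + t * (q 0 0 ^+ 2 + q 0 1 ^+ 2) < 1.
  set P := p 0 0 ^+ 2 + p 0 1 ^+ 2 in hp *; set Q := q 0 0 ^+ 2 + q 0 1 ^+ 2 in hq *.
  have [PQ|QP] := leP P Q.
    have : (1 - t) * P <= (1 - t) * Q by apply: ler_wpM2l; lra.
    lra.
  have : t * Q <= t * P by apply: ler_wpM2l; lra.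
  lra.
lra.
Qed.


Lemma PiE (h : 'rV[R]_3) : Pi h 0 0 = h 0 1 / h 0 0 /\ Pi h 0 1 = h 0 2 / h 0 0.
Proof. by rewrite /Pi !mxE /= i31 i32. Qed.

Lemma axisP a z : axis a z <-> @D2 R z /\ fa a z = 0.
Proof.
split.
  case=> h [[Hh h0] ha] <-.
  have [P0 P1] := PiE h.
  have hw : h 0 0 * (h 0 0)^-1 = 1 by rewrite mulfV // gt_eqF.
  have w0 : 0 < (h 0 0)^-1 by rewrite invr_gt0.
  move: Hh ha; rewrite /mdot => Hh ha.
  split.
    rewrite /D2 /= P0 P1.
    have -> : (h 0 1 / h 0 0) ^+ 2 + (h 0 2 / h 0 0) ^+ 2 = 1 - (h 0 0)^-1 ^+ 2.
      transitivity ((h 0 1 * h 0 1 + h 0 2 * h 0 2) * (h 0 0)^-1 ^+ 2); first by ring.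
      have -> : h 0 1 * h 0 1 + h 0 2 * h 0 2 = h 0 0 * h 0 0 - 1 by lra.
      transitivity ((h 0 0 * (h 0 0)^-1) ^+ 2 - (h 0 0)^-1 ^+ 2); first by ring.
      by rewrite hw expr1n.
    have : 0 < (h 0 0)^-1 ^+ 2 by apply: exprn_gt0.
    lra.
  rewrite faE P0 P1.
  transitivity ((h 0 0)^-1 * (- (h 0 0 * a 0 0) + h 0 1 * a 0 1 + h 0 2 * a 0 2)
     + a 0 0 * (h 0 0 * (h 0 0)^-1 - 1)); first by ring.
  by rewrite ha hw; ring.
case=> Dz fz.
move: Dz; rewrite /D2 /= => Dz.
set s := Num.sqrt (1 - z 0 0 ^+ 2 - z 0 1 ^+ 2).
have s0 : 0 < s by rewrite sqrtr_gt0; lra.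
have ss : s ^+ 2 = 1 - z 0 0 ^+ 2 - z 0 1 ^+ 2 by rewrite sqr_sqrtr //; lra.
have sw : s * s^-1 = 1 by rewrite mulfV // gt_eqF.
have l0 : lift1 z 0 0 = 1 by rewrite /lift1 mxE.
have l1 : lift1 z 0 1 = z 0 0 by rewrite /lift1 mxE /= i20.
have l2 : lift1 z 0 2 = z 0 1 by rewrite /lift1 mxE /= i21.
exists (s^-1 *: lift1 z); last first.
  apply/rowP => j; rewrite /Pi !mxE.
  case: j => [[|[|//]]] Hj /=.
    rewrite i31 /= i20 mulr1 mulrAC mulfV ?mul1r; last by rewrite invr_eq0 gt_eqF.
    by congr (z 0 _); apply/val_inj.
  rewrite i32 /= i21 mulr1 mulrAC mulfV ?mul1r; last by rewrite invr_eq0 gt_eqF.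
  by congr (z 0 _); apply/val_inj.
have sc : forall i, (s^-1 *: lift1 z) 0 i = s^-1 * lift1 z 0 i by move=> i; rewrite mxE.
split; [split|].
- rewrite /mdot !sc l0 l1 l2.
  transitivity ((s^-1) ^+ 2 * (- s ^+ 2)); last first.
    transitivity (- (s * s^-1) ^+ 2); first by ring.
    by rewrite sw; ring.
  rewrite ss; ring.
- by rewrite !sc l0 mulr1 invr_gt0.
- rewrite /mdot !sc l0 l1 l2.
  transitivity (s^-1 * fa a z); last by rewrite fz mulr0.
  rewrite faE; ring.
Qed.


Lemma comp_char a y : @D2 R y -> fa a y != 0 ->
  connected_component (@D2 R `\` axis a) y = [set z | @D2 R z /\ 0 < fa a z * fa a y].
Proof.
move=> Dy fy; apply/seteqP; split.
  move=> z Cz; have [Dz nz] := connected_component_sub Cz.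
  split => //.
  have fz : fa a z != 0 by apply/eqP => h; apply: nz; apply/axisP.
  rewrite ltNge; apply/negP => hle.
  have hlt : fa a z * fa a y < 0 by rewrite lt_neqAle hle andbT mulf_neq0.
  have cc : connected (connected_component (@D2 R `\` axis a) y) by apply: component_connected.
  have cI := connected_continuous_connected cc (continuous_subspaceT (@fa_cont a)).
  have /connected_intervalP iI := cI.
  have Iy : (fa a @` connected_component (@D2 R `\` axis a) y) (fa a y).
    by exists y => //; apply: connected_component_refl; split => //; move/axisP => [_ /eqP]; rewrite (negbTE fy).
  have Iz : (fa a @` connected_component (@D2 R `\` axis a) y) (fa a z) by exists z.
  have I0 : (fa a @` connected_component (@D2 R `\` axis a) y) 0.
    have [fy0|fy0] := ltP (fa a y) 0.
      apply: (iI _ _ Iy Iz); rewrite (ltW fy0) /=; nra.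
    apply: (iI _ _ Iz Iy); rewrite fy0 andbT; nra.
  case: I0 => w Cw fw0.
  have [Dw nw] := connected_component_sub Cw.
  by apply: nw; apply/axisP.
move=> z [Dz pz].
exists (seg y z @` `[0, 1]%classic); last first.
  by exists 1; [rewrite /= in_itv /= lexx ler01|rewrite /seg subrr scale0r add0r scale1r].
split.
- by exists 0; [rewrite /= in_itv /= lexx ler01|rewrite /seg subr0 scale0r addr0 scale1r].
- move=> _ [t t01 <-]; move: t01; rewrite /= in_itv /= => t01; split.
    exact: seg_D2.
  move/axisP => [_]; rewrite seg_fa => h.
  have : ((1 - t) * fa a y + t * fa a z) * fa a y = 0 by rewrite h mul0r.
  have fy2 : 0 < fa a y * fa a y by rewrite lt0r mulf_neq0 //= -expr2 sqr_ge0.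
  rewrite (_ : _ * fa a y = (1 - t) * (fa a y * fa a y) + t * (fa a z * fa a y)); last by ring.
  move: t01 => /andP[t0 t1].
  have h1 : 0 <= (1 - t) * (fa a y * fa a y) by apply: mulr_ge0; [lra|exact: ltW].
  have [t00|tp] := eqVneq t 0.
    rewrite t00 subr0 mul1r mul0r addr0 => e; move: fy2; rewrite e ltxx //.
  have h2 : 0 < t * (fa a z * fa a y) by apply: mulr_gt0 => //; rewrite lt_neqAle eq_sym tp.
  lra.
- exact: connected_continuous_connected (@segment_connected R 0 1) (continuous_subspaceT (@seg_cont y z)).
Qed.


Lemma closure_closed (T : topologicalType) (A B : set T) :
  closed B -> A `<=` B -> closure A `<=` B.
Proof. by move=> /closure_id cB AB; rewrite cB; apply: closureS. Qed.

Lemma half_closed a k : closed [set z : 'rV[R]_2 | 0 <= fa a z * k].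
Proof.
have -> : [set z : 'rV[R]_2 | 0 <= fa a z * k] = (fun z => fa a z * k) @^-1` [set x | 0 <= x].
  by [].
apply: preimage_closed; last exact: closed_ge.
move=> z _; apply: continuousM; [exact: fa_cont|exact: cst_continuous].
Qed.

Lemma closure_half a k : closure [set z | @D2 R z /\ 0 < fa a z * k] `<=` [set z | 0 <= fa a z * k].
Proof. by apply: closure_closed; [exact: half_closed| move=> z [_ /ltW]]. Qed.

Lemma small_pos (d M : R) : 0 < d -> 0 <= M -> exists e, [/\ 0 < e, e <= 1 & e * M < d].
Proof.
move=> d0 M0; exists (d / (d + M + 1)).
have D0 : 0 < d + M + 1 by lra.
split.
- by apply: divr_gt0.
- by rewrite ler_pdivrMr // mul1r; lra.
- rewrite mulrAC ltr_pdivrMr //; nra.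
Qed.


Lemma comp_nonzero tau a y : @D2 R y -> fa tau y != 0 -> a != 0 ->
  exists z, connected_component (@D2 R `\` axis tau) y z /\ fa a z != 0.
Proof.
move=> Dy fy an0; rewrite comp_char //.
apply: contrapT => H.
have H' : forall z, @D2 R z -> 0 < fa tau z * fa tau y -> fa a z = 0.
  move=> z Dz pz; apply/eqP; apply: contrapT => nz; apply: H; exists z; split => //.
  exact/negP.
move: Dy; rewrite /D2 /= => Dy.
set d := Num.min (1 - (y 0 0 ^+ 2 + y 0 1 ^+ 2)) (fa tau y * fa tau y).
have fy2 : 0 < fa tau y * fa tau y by rewrite lt0r mulf_neq0 //= -expr2 sqr_ge0.
have d0 : 0 < d by rewrite lt_min fy2 andbT; lra.
have dle1 : d <= 1 - (y 0 0 ^+ 2 + y 0 1 ^+ 2) by rewrite ge_min lexx.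
have dle2 : d <= fa tau y * fa tau y by rewrite ge_min lexx orbT.
set M := 2 * `|y 0 0| + 2 * `|y 0 1| + 1 + `|tau 0 1 * fa tau y| + `|tau 0 2 * fa tau y|.
have M0 : 0 <= M by rewrite /M; have := normr_ge0 (y 0 0); have := normr_ge0 (y 0 1);
  have := normr_ge0 (tau 0 1 * fa tau y); have := normr_ge0 (tau 0 2 * fa tau y); lra.
have [e [e0 e1 eM]] := @small_pos d M d0 M0.
have eM' : 0 <= e * M by apply: mulr_ge0 => //; exact: ltW.
pose z0 := y + \row_(j < 2) (if (j : nat) == 0%N then e else 0).
pose z1 := y + \row_(j < 2) (if (j : nat) == 0%N then 0 else e).
have z00 : z0 0 0 = y 0 0 + e by rewrite !mxE.
have z01 : z0 0 1 = y 0 1 by rewrite !mxE /= addr0.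
have z10 : z1 0 0 = y 0 0 by rewrite !mxE /= addr0.
have z11 : z1 0 1 = y 0 1 + e by rewrite !mxE.
have g1 := normr_ge0 (y 0 0); have g2 := normr_ge0 (y 0 1).
have g3 := normr_ge0 (tau 0 1 * fa tau y); have g4 := normr_ge0 (tau 0 2 * fa tau y).
have ny0 := ler_norm (y 0 0); have ny1 := ler_norm (y 0 1).
have nt1 := ler_norm (- (tau 0 1 * fa tau y)); rewrite normrN in nt1.
have nt2 := ler_norm (- (tau 0 2 * fa tau y)); rewrite normrN in nt2.
have a1 : a 0 1 = 0.
  have Dz : @D2 R z0.
    rewrite /D2 /= z00 z01.
    have : e * (2 * y 0 0 + e) <= e * M by apply: ler_wpM2l; [exact: ltW| rewrite /M; lra].
    have -> : (y 0 0 + e) ^+ 2 + y 0 1 ^+ 2 = y 0 0 ^+ 2 + y 0 1 ^+ 2 + e * (2 * y 0 0 + e) by ring.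
    lra.
  have pz : 0 < fa tau z0 * fa tau y.
    rewrite faE z00 z01 (_ : _ * _ = fa tau y * fa tau y + e * (tau 0 1 * fa tau y)); last by rewrite faE; ring.
    have : e * (- (tau 0 1 * fa tau y)) <= e * M by apply: ler_wpM2l; [exact: ltW| rewrite /M; lra].
    lra.
  have hy : fa a y = 0 by apply: H'.
  have hz := H' _ Dz pz.
  have : fa a z0 - fa a y = e * a 0 1 by rewrite !faE z00 z01; ring.
  by rewrite hz hy subrr => /esym/eqP; rewrite mulf_eq0 gt_eqF //= => /eqP.
have a2 : a 0 2 = 0.
  have Dz : @D2 R z1.
    rewrite /D2 /= z10 z11.
    have : e * (2 * y 0 1 + e) <= e * M by apply: ler_wpM2l; [exact: ltW| rewrite /M; lra].
    have -> : y 0 0 ^+ 2 + (y 0 1 + e) ^+ 2 = y 0 0 ^+ 2 + y 0 1 ^+ 2 + e * (2 * y 0 1 + e) by ring.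
    lra.
  have pz : 0 < fa tau z1 * fa tau y.
    rewrite faE z10 z11 (_ : _ * _ = fa tau y * fa tau y + e * (tau 0 2 * fa tau y)); last by rewrite faE; ring.
    have : e * (- (tau 0 2 * fa tau y)) <= e * M by apply: ler_wpM2l; [exact: ltW| rewrite /M; lra].
    lra.
  have hy : fa a y = 0 by apply: H'.
  have hz := H' _ Dz pz.
  have : fa a z1 - fa a y = e * a 0 2 by rewrite !faE z10 z11; ring.
  by rewrite hz hy subrr => /esym/eqP; rewrite mulf_eq0 gt_eqF //= => /eqP.
have a0 : a 0 0 = 0.
  have hy : fa a y = 0 by apply: H'.
  by move: hy; rewrite faE a1 a2 !mulr0 !addr0 => /eqP; rewrite oppr_eq0 => /eqP.
move/eqP: an0; apply; apply/rowP => j; rewrite mxE.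
case: j => [[|[|[|//]]]] Hj.
- by rewrite -a0; congr (a 0 _); apply/val_inj.
- by rewrite -a1; congr (a 0 _); apply/val_inj.
- by rewrite -a2; congr (a 0 _); apply/val_inj.
Qed.



Lemma axis_nonempty tau : hyperbolic tau -> exists z, @axis R tau z.
Proof.
rewrite /hyperbolic /mdot => ht.
set n := tau 0 1 * tau 0 1 + tau 0 2 * tau 0 2.
have n0 : 0 < n by have := sqr_ge0 (tau 0 0); rewrite expr2 /n; lra.
set c := tau 0 0 / n.
have cn : c * n = tau 0 0 by rewrite /c divfK // gt_eqF.
pose z := \row_(j < 2) (c * tau 0 (inord j.+1)).
have z0 : z 0 0 = c * tau 0 1 by rewrite mxE /= i31.
have z1 : z 0 1 = c * tau 0 2 by rewrite mxE /= i32.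
exists z; apply/axisP; split.
  rewrite /D2 /= z0 z1.
  have -> : (c * tau 0 1) ^+ 2 + (c * tau 0 2) ^+ 2 = (tau 0 0 * tau 0 0) / n.
    have nn : n != 0 by rewrite gt_eqF.
    by move: nn; rewrite /c /n => nn; field.
  by rewrite ltr_pdivrMr // mul1r /n; lra.
rewrite faE z0 z1.
transitivity (- tau 0 0 + c * n); first by rewrite /n; ring.
by rewrite cn; ring.
Qed.


Lemma stratum_nonempty tau S : hyperbolic tau -> strata (@axis R tau) S -> exists z, S z.
Proof.
move=> ht [->|[y [hy ->]]]; first exact: axis_nonempty.
by exists y; apply: connected_component_refl.
Qed.

Lemma stratum_D2 tau S : strata (@axis R tau) S -> S `<=` @D2 R.
Proof.
move=> [->|[y [hy ->]]] z; first by move/axisP => [].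
by move/connected_component_sub => [].
Qed.

Lemma fa_ne0 tau y : ~ @axis R tau y -> @D2 R y -> fa tau y != 0.
Proof. by move=> ny Dy; apply/eqP => h; apply: ny; apply/axisP. Qed.

Lemma pair_nonzero tau a S1 S2 : hyperbolic tau -> strata (@axis R tau) S1 ->
  strata (@axis R tau) S2 -> S1 <> S2 -> a != 0 ->
  exists p q, [/\ S1 p, S2 q & fa a p != 0 \/ fa a q != 0].
Proof.
move=> ht hS1 hS2 S12 an0.
case: (hS1) => [E1|[y1 [[Dy1 ny1] E1]]].
  case: (hS2) => [E2|[y2 [[Dy2 ny2] E2]]].
    by exfalso; apply: S12; rewrite E1 E2.
  have [q [Cq fq]] := comp_nonzero Dy2 (fa_ne0 ny2 Dy2) an0.
  have [p Sp] := stratum_nonempty ht hS1.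
  by exists p, q; split => //; [rewrite E2|right].
have [p [Cp fp]] := comp_nonzero Dy1 (fa_ne0 ny1 Dy1) an0.
have [q Sq] := stratum_nonempty ht hS2.
by exists p, q; split => //; [rewrite E1|left].
Qed.

End S.

Unset Implicit Arguments.

Theorem lemma3p11 (R : realType) (b : bool) (l : set (vec2 R))
    (E : vec2 R -> vec2 R) (sig : set (vec2 R) -> vec3 R)
    (S1 S2 : set (vec2 R)) :
  simple_inf_earthquake b l E sig ->
  strata l S1 -> strata l S2 ->
  let sigma := sig S2 - sig S1 in
  (forall x, closure S2 x -> 0 <= sgnb R b * mdot (lift1 x) sigma) /\
  (forall x, closure S1 x -> sgnb R b * mdot (lift1 x) sigma <= 0).
Proof.
move=> [[tau [htau El]] hE hS] hS1 hS2 sigma.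
subst l.
have := hS S1 S2 hS1 hS2; rewrite /= -/sigma => -[h0 h1].
have sg2 : sgnb R b * sgnb R b = 1 by case: (b); rewrite /sgnb ?mulrNN mulr1.
have sgn0 : sgnb R b != 0 by case: (b); rewrite /sgnb ?oppr_eq0 oner_eq0.
have [s0|sn0] := eqVneq sigma 0.
  have m0 : forall x, mdot (lift1 x) sigma = 0.
    by move=> x; rewrite s0 /mdot !mxE !mulr0 oppr0 !addr0.
  by split => x _; rewrite m0 mulr0.
have sn0' : sigma <> 0 by apply/eqP.
have [hyp ws tr] := h1 sn0'.
case: ws => C [C' [cC cC' CC' S1C S2C']].
case: cC => y [[Dy ny] EC]; case: cC' => y' [[Dy' ny'] EC'].
have fy := fa_ne0 ny Dy; have fy' := fa_ne0 ny' Dy'.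
rewrite comp_char // in EC; rewrite comp_char // in EC'.
have cl1 : forall x, closure S1 x -> 0 <= fa sigma x * fa sigma y.
  apply: (@closure_closed _ S1 [set z | 0 <= fa sigma z * fa sigma y]); first exact: half_closed.
  by move=> z /S1C; rewrite EC; apply: closure_half.
have cl2 : forall x, closure S2 x -> 0 <= fa sigma x * fa sigma y'.
  apply: (@closure_closed _ S2 [set z | 0 <= fa sigma z * fa sigma y']); first exact: half_closed.
  by move=> z /S2C'; rewrite EC'; apply: closure_half.
have fy2 : 0 < fa sigma y * fa sigma y by rewrite lt0r mulf_neq0 //= -expr2 sqr_ge0.
have fy2' : 0 < fa sigma y' * fa sigma y' by rewrite lt0r mulf_neq0 //= -expr2 sqr_ge0.
have yy' : fa sigma y * fa sigma y' < 0.
  rewrite ltNge; apply/negP => hle; apply: CC'; rewrite EC EC'.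
  have pos : 0 < fa sigma y * fa sigma y' by rewrite lt_neqAle eq_sym mulf_neq0.
  apply/seteqP; split => z [Dz pz]; split => //.
    have := mulr_gt0 pz pos; nra.
  have := mulr_gt0 pz pos; nra.
set sg := sgnb R b in sg2 sgn0 tr *.
have gneg : sg * fa sigma y < 0.
  rewrite ltNge; apply/negP => g0.
  have gpos : 0 < sg * fa sigma y by rewrite lt_neqAle eq_sym mulf_neq0.
  have S12 : S1 <> S2 by move=> e; apply: sn0'; rewrite /sigma e subrr.
  have [p [q [Sp Sq nz]]] := pair_nonzero htau hS1 hS2 S12 sn0.
  have Dp := stratum_D2 hS1 Sp; have Dq := stratum_D2 hS2 Sq.
  have cp := cl1 p (subset_closure Sp); have cq := cl2 q (subset_closure Sq).
  set fp := fa sigma p in cp nz *; set fq := fa sigma q in cq nz *.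
  set fy0 := fa sigma y in fy2 yy' gpos cp *; set fy1 := fa sigma y' in fy2' yy' cq *.
  have Fp : 0 <= sg * fp.
    have e : (sg * fp) * (sg * fy0) = (sg * sg) * (fp * fy0) by ring.
    have : 0 <= (sg * fp) * (sg * fy0) by rewrite e sg2 mul1r.
    nra.
  have fqy : fq * fy0 <= 0.
    have : (fq * fy0) * (fy1 * fy1) = (fq * fy1) * (fy0 * fy1) by ring.
    nra.
  have Fq : sg * fq <= 0.
    have e : (sg * fq) * (sg * fy0) = (sg * sg) * (fq * fy0) by ring.
    have : (sg * fq) * (sg * fy0) <= 0 by rewrite e sg2 mul1r.
    nra.
  have Fpq : 0 < sg * fp - sg * fq.
    rewrite lt_neqAle subr_ge0 (le_trans Fq Fp) andbT eq_sym subr_eq0.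
    apply/negP => /eqP e.
    have e0 : sg * fp = 0 by apply/eqP; rewrite eq_le Fp andbT e Fq.
    have e1 : sg * fq = 0 by rewrite -e.
    move: e0 e1 => /eqP; rewrite mulf_eq0 (negbTE sgn0) /= => /eqP e0 /eqP.
    rewrite mulf_eq0 (negbTE sgn0) /= => /eqP e1.
    by case: nz; rewrite ?e0 ?e1 eqxx.
  set t0 := (sg * fp) / (sg * fp - sg * fq).
  have key : forall t, sg * fa sigma (seg p q t) = sg * fp - t * (sg * fp - sg * fq).
    by move=> t; rewrite seg_fa -/fp -/fq; ring.
  have t0e : sg * fp - t0 * (sg * fp - sg * fq) = 0.
    by rewrite /t0 divfK ?subrr // gt_eqF.
  have t01 : 0 <= t0 <= 1.
    rewrite /t0 divr_ge0 ?(ltW Fpq) //= ler_pdivrMr // mul1r; lra.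
  have fseg : fa sigma (seg p q t0) = 0.
    by have := key t0; rewrite t0e => /eqP; rewrite mulf_eq0 (negbTE sgn0) /= => /eqP.
  have ax0 : axis sigma (seg p q t0) by apply/axisP; split => //; exact: seg_D2.
  have uniq : forall t, 0 <= t <= 1 -> axis sigma (seg p q t) -> t = t0.
    move=> t _ /axisP [_ ft].
    have : sg * fa sigma (seg p q t) = 0 by rewrite ft mulr0.
    rewrite key => h.
    have Dn : sg * fp - sg * fq != 0 by rewrite gt_eqF.
    have : t * (sg * fp - sg * fq) = t0 * (sg * fp - sg * fq) by rewrite /t0 divfK //; lra.
    by move/(mulIf Dn).
  have := tr p q t0 Sp Sq t01 uniq ax0.
  rewrite det2_Lambda fseg mul0r addr0.
  have -> : (q - p) 0 0 * sigma 0 1 + (q - p) 0 1 * sigma 0 2 = fq - fp.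
    by rewrite /fq /fp !faE !mxE; ring.
  have Dx := seg_D2 Dp Dq t01.
  move: Dx; rewrite /D2 /= => Dx.
  have : 0 < 1 - (seg p q t0) 0 0 ^+ 2 - (seg p q t0) 0 1 ^+ 2 by lra.
  rewrite -/sg; set Dd := (1 - _ - _) => hD h.
  have := mulr_gt0 hD Fpq.
  have e : sg * (Dd * (fq - fp)) = - (Dd * (sg * fp - sg * fq)) by ring.
  lra.
have fyy : 0 < sg * fa sigma y'.
  have e : (sg * fa sigma y) * (fa sigma y * fa sigma y') = (sg * fa sigma y') * (fa sigma y * fa sigma y) by ring.
  have h1' : 0 < (sg * fa sigma y) * (fa sigma y * fa sigma y') by nra.
  rewrite e in h1'; nra.
split => x cx; rewrite -/(fa sigma x).
  have := cl2 x cx.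
  have e : (sg * fa sigma x) * (sg * fa sigma y') = (sg * sg) * (fa sigma x * fa sigma y') by ring.
  rewrite sg2 mul1r in e; rewrite -e => h; nra.
have := cl1 x cx.
have e : (sg * fa sigma x) * (sg * fa sigma y) = (sg * sg) * (fa sigma x * fa sigma y) by ring.
rewrite sg2 mul1r in e; rewrite -e => h; nra.
Qed.
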